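(* Consider the segregation process with window size $w$ on a ring network of size $n$, started from a uniformly random initial configuration. For any fixed $w$, as $n\to\infty$, the probability that the process eventually reaches a frozen configuration converges to $1$.
   Context: Segregation process: the nodes of an $n$-cycle are indexed mod $n$; at every time there is a bijection between $n$ individuals and the nodes, and each individual has a type (label) $x$ or $o$. Initially each node independently receives label $x$ or $o$ with probability $1/2$ each. With sign $+1$ for $x$ and $-1$ for $o$, the $x$-bias $\beta_t(i)$ of node $i$ at time $t$ is the sum of the signs of the labels of nodes $i-w,\dots,i+w$ (mod $n$). An individual of type $x$ at node $i$ is happy iff $\beta_t(i)>0$, one of type $o$ iff $\beta_t(i)<0$; otherwise unhappy. At each time step two individuals are chosen uniformly at random; if both are unhappy and of opposite types they exchange nodes, otherwise nothing changes. A frozen configuration is one in which no further swaps are possible (i.e. there are not both an unhappy $x$ and an unhappy $o$). *)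

(* Defs.v *)
From mathcomp Require Import all_boot all_order all_algebra.
Set Implicit Arguments. Unset Strict Implicit. Unset Printing Implicit Defensive.
Import Order.TTheory GRing.Theory Num.Theory.
Local Open Scope ring_scope.

(* A configuration of the n-cycle: the label of each node,
   true = type x, false = type o.  Individuals of the same type are
   interchangeable for the dynamics, so only labels are recorded. *)
Definition config (n : nat) := (n.-tuple bool)%type.

Definition lab n (c : config n) (j : nat) : bool := nth false c (j %% n).

Definition sgn (b : bool) : int := if b then 1 else -1.

(* x-bias of node i: sum of signs of nodes i-w, ..., i+w (mod n).
   The index i + n*w + k - w is congruent to i + k - w mod n and
   is computed without truncation for n >= 1. *)
Definition bias n (w : nat) (c : config n) (i : nat) : int :=
  \sum_(k < (2 * w).+1) sgn (lab c (i + n * w + k - w)%N).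

Definition happy n w (c : config n) (i : nat) : bool :=
  if lab c i then 0 < bias w c i else bias w c i < 0.

Definition unhappy n w (c : config n) (i : nat) : bool := ~~ happy w c i.

Definition frozen n w (c : config n) : bool :=
  ~~ [exists i : 'I_n, exists j : 'I_n,
        [&& unhappy w c i, unhappy w c j, lab c i & ~~ lab c j]].

Definition swap_step n w (c : config n) (i j : 'I_n) : config n :=
  if [&& unhappy w c i, unhappy w c j & lab c i != lab c j] then
    [tuple (if k == i then lab c j else if k == j then lab c i else lab c k)
       | k < n]
  else c.

(* transition probability: two distinct individuals chosen uniformly
   at random (ordered pair of distinct nodes, n(n-1) choices) *)
Definition trans n w (c c' : config n) : rat :=
  (#|[set p : 'I_n * 'I_n | (p.1 != p.2) && (swap_step w c p.1 p.2 == c')]|%:R)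
  / (n * n.-1)%:R.

Fixpoint distr (n w : nat) (t : nat) : {ffun config n -> rat} :=
  match t with
  | 0 => [ffun _ => 1 / (2 ^ n)%:R]
  | t'.+1 => [ffun c' => \sum_(c : config n) distr n w t' c * trans w c c']
  end.

(* probability that the configuration at time t is frozen; since frozen
   configurations are absorbing this is nondecreasing in t and its
   supremum over t is the probability of eventually freezing *)
Definition prob_frozen_at n w (t : nat) : rat :=
  \sum_(c : config n | frozen w c) distr n w t c.

(* Main.v *)
Require Import Defs.
From mathcomp Require Import all_boot all_order all_algebra.
From mathcomp Require Import zify ring lra.
Import Order.TTheory GRing.Theory Num.Theory.
Local Open Scope ring_scope.
Set Implicit Arguments. Unset Strict Implicit.

Definition offs (n w d : nat) : nat := (n * w + d - w)%N.
Definition Wf (n w : nat) (f : nat -> int) (k : nat) : int :=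
  \sum_(d < (2*w).+1) f (k + offs n w d)%N.
Definition Bf (n w : nat) (f g : nat -> int) : int :=
  \sum_(0 <= k < n) f k * Wf n w g k.
Definition per (n : nat) (f : nat -> int) := forall k, f (k + n)%N = f k.

Lemma per_mul n f g : per n f -> per n g -> per n (fun k => f k * g k).
Proof. by move=> hf hg k; rewrite hf hg. Qed.

Lemma per_iter n f j k : per n f -> f (k + n * j)%N = f k.
Proof.
move=> hf; elim: j k => [|j IH] k; first by rewrite muln0 addn0.
by rewrite mulnS addnA IH hf.
Qed.

Lemma shift1 n (h : nat -> int) : per n h ->
  \sum_(0 <= k < n) h (k + 1)%N = \sum_(0 <= k < n) h k.
Proof.
case: n => [|n] hp; first by rewrite !big_geq.
rewrite big_nat_recr // big_nat_recl //.
have -> : h (n + 1)%N = h 0%N by rewrite addn1 -(add0n n.+1) hp.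
rewrite addrC; congr (_ + _); apply: eq_bigr => k _; by rewrite addn1.
Qed.

Lemma shift n (h : nat -> int) m : per n h ->
  \sum_(0 <= k < n) h (k + m)%N = \sum_(0 <= k < n) h k.
Proof.
elim: m h => [|m IH] h hp; first by apply: eq_bigr => k _; rewrite addn0.
have hp' : per n (fun k => h (k + m)%N).
  by move=> k; rewrite -addnA (addnC n) addnA hp.
rewrite -(IH h hp) -(@shift1 n (fun k => h (k + m)%N) hp').
by apply: eq_bigr => k _; congr h; lia.
Qed.

Lemma Bf_sym n w f g : (0 < n)%N -> per n f -> per n g -> Bf n w f g = Bf n w g f.
Proof.
move=> n0 pf pg.
have hw : (w <= n * w)%N by rewrite leq_pmull.
rewrite /Bf /Wf.
under eq_bigr => k _ do rewrite big_distrr.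
under [RHS]eq_bigr => k _ do rewrite big_distrr.
rewrite exchange_big [RHS]exchange_big /=.
rewrite [RHS](reindex_inj rev_ord_inj) /=.
apply: eq_bigr => d _.
have hd : (d <= 2 * w)%N by rewrite -ltnS.
have pg' : per n (fun k => g (k + offs n w d)%N).
  by move=> k; rewrite -addnA (addnC n) addnA pg.
have E := @shift n (fun k => f k * g (k + offs n w d)%N) (n*w+w-d)%N (per_mul pf pg').
rewrite -E.
apply: eq_bigr => k _.
  rewrite mulrC; congr (_ * _).
  - rewrite -(per_iter (2 * w) k pg); congr g.
    rewrite /offs; set N := (n * w)%N in hw *.
    have -> : (n * (2 * w))%N = (2 * N)%N by rewrite /N mulnCA.
    lia.
  - congr f; rewrite /offs subSS; set N := (n * w)%N in hw *; lia.
Qed.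


Definition sg n (c : config n) (k : nat) : int := sgn (lab c k).
Definition ee (n a k : nat) : int := if (k %% n == a)%N then 1 else 0.
Definition Phi n w (c : config n) : int := Bf n w (sg c) (sg c).

Lemma per_sg n (c : config n) : per n (sg c).
Proof. by move=> k; rewrite /sg /lab modnDr. Qed.

Lemma per_ee n a : per n (ee n a).
Proof. by move=> k; rewrite /ee modnDr. Qed.

Lemma pick n a (G : nat -> int) : (a < n)%N ->
  \sum_(0 <= k < n) ee n a k * G k = G a.
Proof.
move=> ha; rewrite big_mkord (bigD1 (Ordinal ha)) //= big1 ?addr0.
  by rewrite /ee modn_small // eqxx mul1r.
move=> k hk; rewrite /ee modn_small //.
case: eqP => [ek|]; last by rewrite mul0r.
exfalso; move: hk; suff -> : k = Ordinal ha by rewrite eqxx.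
by apply: val_inj.
Qed.

Lemma pick2 n a b (G : nat -> int) (x : int) : (a < n)%N -> (b < n)%N ->
  \sum_(0 <= k < n) (x * (ee n a k - ee n b k)) * G k = x * (G a - G b).
Proof.
move=> ha hb.
under eq_bigr => k _ do rewrite -mulrA mulrBl.
by rewrite -mulr_sumr sumrB !pick.
Qed.

Lemma Wf_lin n w (f g h : nat -> int) (x : int) k :
  Wf n w (fun k => f k + x * (g k - h k)) k = Wf n w f k + x * (Wf n w g k - Wf n w h k).
Proof. by rewrite /Wf big_split /= -sumrB mulr_sumr. Qed.

Lemma Wf_lin0 n w (g h : nat -> int) (x : int) k :
  Wf n w (fun k => x * (g k - h k)) k = x * (Wf n w g k - Wf n w h k).
Proof. by rewrite /Wf -sumrB mulr_sumr. Qed.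

Lemma Bf_ext n w f f' g g' : (forall k, f k = f' k) -> (forall k, g k = g' k) ->
  Bf n w f g = Bf n w f' g'.
Proof.
move=> hf hg; apply: eq_bigr => k _; rewrite hf; congr (_ * _).
by apply: eq_bigr => d _; rewrite hg.
Qed.

Lemma bias_eq n w (c : config n) (i : nat) : (0 < n)%N -> bias w c i = Wf n w (sg c) i.
Proof.
move=> n0; have hw : (w <= n * w)%N by rewrite leq_pmull.
apply: eq_bigr => d _; rewrite /sg /offs; congr (sgn (lab c _)).
set N := (n * w)%N in hw *; lia.
Qed.

Lemma sum_sgn_odd m (F : nat -> bool) : exists z : int,
  \sum_(d < m) sgn (F d) = m%:Z - 2 * z.
Proof.
elim: m => [|m [z IH]]; first by exists 0; rewrite big_ord0.
rewrite big_ord_recr /= IH /sgn; case: (F m).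
  by exists z; lia.
by exists (z + 1); lia.
Qed.

Lemma Wf_ne0 n w (c : config n) k : Wf n w (sg c) k != 0.
Proof.
have [z hz] := sum_sgn_odd ((2 * w).+1) (fun d => lab c (k + offs n w d)%N).
rewrite /Wf /sg hz; apply/eqP; lia.
Qed.

Lemma Wf_ee_ge0 n w a k : 0 <= Wf n w (ee n a) k.
Proof. by apply: sumr_ge0 => d _; rewrite /ee; case: eqP. Qed.

Lemma Wf_ee_le1 n w a k : (2 * w < n)%N -> Wf n w (ee n a) k <= 1.
Proof.
move=> hn.
have n0 : (0 < n)%N by apply: leq_ltn_trans hn.
have hw : (w <= n * w)%N by rewrite leq_pmull.
case: (boolP [exists d : 'I_(2*w).+1, ((k + offs n w d) %% n == a)%N]).
  move=> /existsP [d0 hd0]; rewrite /Wf (bigD1 d0) //= big1.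
    by rewrite /ee hd0 addr0.
  move=> d hd; rewrite /ee; case: eqP => // hda; exfalso.
  move: hd0; rewrite -hda => /eqP.
  have E : forall d : 'I_(2*w).+1, (k + offs n w d = (k + n * w - w) + d)%N.
    move=> d'; rewrite /offs; set N := (n * w)%N in hw *; lia.
  rewrite !E => /eqP; rewrite eqn_modDl !modn_small.
  - by move=> /eqP /val_inj hdd; move: hd; rewrite hdd eqxx.
  - by apply: leq_trans (ltn_ord d) _.
  - by apply: leq_trans (ltn_ord d0) _.
move=> hne; rewrite /Wf big1 // => d _; rewrite /ee; case: eqP => // hd.
by move: hne; rewrite negb_exists => /forallP /(_ d); rewrite hd eqxx.
Qed.

Lemma Wf_ee_self n w a : (0 < n)%N -> (a < n)%N -> 1 <= Wf n w (ee n a) a.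
Proof.
move=> n0 ha.
have hwo : (w < (2 * w).+1)%N by lia.
rewrite /Wf (bigD1 (Ordinal hwo)) //=.
have -> : ee n a (a + offs n w w) = 1.
  by rewrite /ee /offs addnK mulnC addnC modnMDl modn_small // eqxx.
by rewrite lerDl; apply: sumr_ge0 => d _; rewrite /ee; case: eqP.
Qed.


Lemma sg_swap n (c : config n) (i j : 'I_n) k : i != j ->
  sg [tuple (if k == i then lab c j else if k == j then lab c i else lab c k) | k < n] k
  = sg c k + (sg c j - sg c i) * (ee n i k - ee n j k).
Proof.
move=> hij.
have n0 : (0 < n)%N by apply: leq_ltn_trans (ltn_ord i).
have hk : (k %% n < n)%N by rewrite ltn_pmod.
rewrite /sg {1}/lab -(tnth_nth false _ (Ordinal hk)) tnth_mktuple /ee.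
have -> : (Ordinal hk == i) = (k %% n == i)%N by [].
have -> : (Ordinal hk == j) = (k %% n == j)%N by [].
have li : forall m : 'I_n, lab c m = lab c (m %% n)%N by move=> m; rewrite /lab modn_mod.
case: eqP => [ei|ni].
  have : (k %% n != j)%N by apply/eqP => ej; move: hij; rewrite -(inj_eq val_inj) /= -ei ej eqxx.
  move=> /negbTE ->; rewrite /lab ei !modn_small //; ring.
case: eqP => [ej|nj]; last by rewrite /lab /= modn_mod; ring.
by rewrite /lab ej !modn_small //; ring.
Qed.

Lemma Phi_swap n w (c : config n) (i j : 'I_n) : (2 * w < n)%N ->
  Phi w c + (if [&& unhappy w c i, unhappy w c j & lab c i != lab c j] then 8 else 0)
  <= Phi w (swap_step w c i j).
Proof.
move=> hn; have n0 : (0 < n)%N by apply: leq_ltn_trans hn.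
rewrite /swap_step; case: ifP => H; last by rewrite addr0.
move/and3P: H => [ui uj lij].
have hij : i != j by apply: contra lij => /eqP ->.
rewrite /Phi (Bf_ext n w (fun k => @sg_swap n c i j k hij) (fun k => @sg_swap n c i j k hij)).
unfold Bf.
have WL : forall k, Wf n w (fun k0 => sg c k0 + (sg c j - sg c i) * (ee n i k0 - ee n j k0)) k
   = Wf n w (sg c) k + (sg c j - sg c i) * (Wf n w (ee n i) k - Wf n w (ee n j) k).
  by move=> k; apply: Wf_lin.
have M4 : forall x y z t : int, (x+y)*(z+t) = x*z + x*t + (y*z + y*t) by move=> *; ring.
under [X in _ <= X]eq_bigr => k _ do rewrite WL M4.
rewrite !big_split /=.
have T2 : \sum_(0 <= k < n) sg c k * ((sg c j - sg c i) * (Wf n w (ee n i) k - Wf n w (ee n j) k))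
   = (sg c j - sg c i) * (Wf n w (sg c) i - Wf n w (sg c) j).
  transitivity (Bf n w (sg c) (fun k => (sg c j - sg c i) * (ee n i k - ee n j k))).
    by apply: eq_bigr => k _; rewrite Wf_lin0.
  rewrite Bf_sym //; first exact: pick2.
    exact: per_sg.
  by move=> k; rewrite !per_ee.
rewrite T2 !pick2 //.
have := Wf_ne0 w c i; have := Wf_ne0 w c j.
move: ui uj lij; rewrite /unhappy /happy !bias_eq //.
have := Wf_ee_le1 i i hn; have := Wf_ee_le1 i j hn.
have := Wf_ee_le1 j i hn; have := Wf_ee_le1 j j hn.
have := Wf_ee_ge0 n w i i; have := Wf_ee_ge0 n w i j.
have := Wf_ee_ge0 n w j i; have := Wf_ee_ge0 n w j j.
have := Wf_ee_self w n0 (ltn_ord i); have := Wf_ee_self w n0 (ltn_ord j).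
have si : sg c i = sgn (lab c i) by [].
have sj : sg c j = sgn (lab c j) by [].
rewrite si sj.
set P := \sum_(0 <= k < n) _.
set Xi := Wf n w (sg c) i. set Xj := Wf n w (sg c) j.
set A := Wf n w (ee n i) i. set B := Wf n w (ee n j) i.
set C := Wf n w (ee n i) j. set D := Wf n w (ee n j) j.
case: (lab c i); case: (lab c j) => //= *; lia.
Qed.


Lemma card_pairs (R : numDomainType) n :
  \sum_(p : 'I_n * 'I_n | p.1 != p.2) (1 : R) = (n * n.-1)%:R.
Proof.
transitivity (\sum_(i : 'I_n) \sum_(j : 'I_n) (if i != j then 1 else 0 : R)).
  rewrite pair_big /= big_mkcond /=; apply: eq_bigr => p _; by [].
have E : forall i : 'I_n, \sum_(j | i != j) (1 : R) = n.-1%:R.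
  move=> i; rewrite sumr_const.
  have -> : #|[pred j : 'I_n | i != j]| = #|predC1 i|.
    by apply: eq_card => j /=; rewrite !inE eq_sym.
  by rewrite cardC1 card_ord.
under eq_bigr => i _ do rewrite -big_mkcond /= E.
rewrite sumr_const card_ord.
by rewrite natrM mulrC mulr_natr.
Qed.

Lemma trans_sum n w (c : config n) (F : config n -> rat) :
  \sum_(c' : config n) trans w c c' * F c'
  = (\sum_(p : 'I_n * 'I_n | p.1 != p.2) F (swap_step w c p.1 p.2)) / (n * n.-1)%:R.
Proof.
rewrite /trans.
under eq_bigr => c' _ do rewrite mulrAC.
rewrite -mulr_suml; congr (_ / _).
under eq_bigr => c' _ do rewrite mulr_natl -sumr_const.
rewrite (exchange_big_dep (fun p : 'I_n * 'I_n => p.1 != p.2)) /=.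
  apply: eq_bigr => p hp.
  rewrite (eq_bigl (fun c' => c' == swap_step w c p.1 p.2)).
    by rewrite big_pred1_eq.
  by move=> c'; rewrite inE hp /= eq_sym.
move=> c' p; rewrite inE.
by move=> _ /andP [].

Qed.

Lemma trans_ge0 n w (c c' : config n) : 0 <= trans w c c'.
Proof. by rewrite /trans divr_ge0 // ler0n. Qed.

Lemma distr_ge0 n w t (c : config n) : 0 <= distr n w t c.
Proof.
elim: t c => [|t IH] c /=; rewrite ffunE.
  by rewrite divr_ge0 // ler0n.
by apply: sumr_ge0 => c0 _; rewrite mulr_ge0 // trans_ge0.
Qed.

Lemma K_gt0 n : (1 < n)%N -> (0 : rat) < (n * n.-1)%:R.
Proof. by move=> h; rewrite ltr0n muln_gt0; apply/andP; split; lia. Qed.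

Lemma trans_mass n w (c : config n) : (1 < n)%N -> \sum_(c' : config n) trans w c c' = 1.
Proof.
move=> h.
transitivity (\sum_(c' : config n) trans w c c' * (fun _ => 1) c').
  by apply: eq_bigr => c' _; rewrite mulr1.
rewrite trans_sum card_pairs divff //.
by apply: lt0r_neq0; apply: K_gt0.
Qed.

Lemma mass n w t : (1 < n)%N -> \sum_(c : config n) distr n w t c = 1.
Proof.
move=> h; elim: t => [|t IH] /=.
  under eq_bigr => c _ do rewrite ffunE.
  rewrite sumr_const card_tuple card_bool.
  have hX : ((2 ^ n)%:R : rat) != 0 by rewrite pnatr_eq0 expn_eq0.
  rewrite -mulr_natr; field.
  exact: hX.
under eq_bigr => c _ do rewrite ffunE.
rewrite exchange_big /=.
under eq_bigr => c _ do rewrite -mulr_sumr trans_mass // mulr1.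
exact: IH.
Qed.

Definition Psi n w t : rat := \sum_(c : config n) distr n w t c * (Phi w c)%:~R.
Definition qnf n w t : rat := \sum_(c : config n | ~~ frozen w c) distr n w t c.

Lemma Phi_swap_rat n w (c : config n) (i j : 'I_n) : (2 * w < n)%N ->
  (Phi w c)%:~R + (if [&& unhappy w c i, unhappy w c j & lab c i != lab c j] then 8 else 0)
  <= ((Phi w (swap_step w c i j))%:~R : rat).
Proof.
move=> hn; have := Phi_swap c i j hn; rewrite -(ler_int rat) intrD.
by case: ifP.
Qed.

Lemma const_pairs n (x : rat) :
  \sum_(p : 'I_n * 'I_n | p.1 != p.2) x = (n * n.-1)%:R * x.
Proof.
rewrite -(card_pairs rat n) mulr_suml; apply: eq_bigr => p _; by rewrite mul1r.
Qed.

Lemma step_rat n w (c : config n) : (2 * w < n)%N ->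
  (n * n.-1)%:R * (Phi w c)%:~R + (if frozen w c then 0 else 8)
  <= \sum_(p : 'I_n * 'I_n | p.1 != p.2) ((Phi w (swap_step w c p.1 p.2))%:~R : rat).
Proof.
move=> hn.
apply: le_trans (ler_sum _ (fun p _ => Phi_swap_rat c p.1 p.2 hn)).
rewrite big_split /= const_pairs.
rewrite lerD2l.
case: ifP => hf.
  by apply: sumr_ge0 => p _; case: ifP.
move/negbT: hf; rewrite /frozen negbK => /existsP [i /existsP [j /and4P [ui uj li lj]]].
have hij : (i, j).1 != (i, j).2 by apply/eqP => /= eij; move: lj; rewrite -eij li.
rewrite (bigD1 (i, j)) //= ui uj /=.
have -> : lab c i != lab c j by rewrite li; move: lj; case: (lab c j).
by rewrite lerDl; apply: sumr_ge0 => p _; case: ifP.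
Qed.

Lemma Psi_step n w t : (1 < n)%N -> (2 * w < n)%N ->
  Psi n w t + 8 / (n * n.-1)%:R * qnf n w t <= Psi n w t.+1.
Proof.
move=> h1 hn.
have K0 := K_gt0 h1.
set K : rat := (n * n.-1)%:R in K0 *.
rewrite /Psi /qnf /=.
under [X in _ <= X]eq_bigr => c' _ do rewrite ffunE mulr_suml.
rewrite [X in _ <= X]exchange_big /=.
under [X in _ <= X]eq_bigr => c _ do rewrite -(eq_bigr _ (fun c' _ => mulrA _ _ _)) -mulr_sumr trans_sum.
rewrite mulr_sumr [X in _ + X <= _]big_mkcond -big_split /=.
apply: ler_sum => c _.
set S := \sum_(p | _) _.
have H : (Phi w c)%:~R + (if frozen w c then 0 else 8) / K <= S / K.
  rewrite ler_pdivlMr // mulrDl divfK ?gt_eqF // [_ * K]mulrC.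
  exact: step_rat.
apply: (le_trans _ (ler_wpM2l (@distr_ge0 n w t c) H)).
rewrite mulrDr lerD2l.
by case: (frozen w c) => /=; rewrite ?mul0r ?mulr0 // mulrC.
Qed.

Lemma Wf_sg_bound n w (c : config n) k :
  - ((2 * w).+1)%:Z <= Wf n w (sg c) k <= ((2 * w).+1)%:Z.
Proof.
apply/andP; split.
  have : \sum_(d < (2 * w).+1) (-1 : int) <= Wf n w (sg c) k.
    by apply: ler_sum => d _; rewrite /sg /sgn; case: lab.
  by rewrite sumr_const card_ord mulNrn natz.
have : Wf n w (sg c) k <= \sum_(d < (2 * w).+1) (1 : int).
  by apply: ler_sum => d _; rewrite /sg /sgn; case: lab.
by rewrite sumr_const card_ord natz.
Qed.

Definition Bnd n w : int := ((2 * w).+1)%:Z *+ n.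

Lemma Phi_bound n w (c : config n) : - Bnd n w <= Phi w c <= Bnd n w.
Proof.
rewrite /Phi /Bf /Bnd.
have E : forall x : int, \sum_(0 <= k < n) x = x *+ n by move=> x; rewrite sumr_const_nat subn0.
apply/andP; split.
  rewrite -mulNrn -E.
  apply: ler_sum => k _; have /andP [h1 h2] := @Wf_sg_bound n w c k.
  have [->|->] : sg c k = 1 \/ sg c k = -1 by rewrite /sg /sgn; case: lab; auto.
  by rewrite mul1r.
  by rewrite mulN1r lerN2.
rewrite -E.
apply: ler_sum => k _; have /andP [h1 h2] := @Wf_sg_bound n w c k.
have [->|->] : sg c k = 1 \/ sg c k = -1 by rewrite /sg /sgn; case: lab; auto.
all: lia.
Qed.

Lemma Psi_bound n w t : (1 < n)%N -> - (Bnd n w)%:~R <= Psi n w t <= ((Bnd n w)%:~R : rat).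
Proof.
move=> h; set b : rat := (Bnd n w)%:~R.
have hb : forall x : rat, x = \sum_(c : config n) distr n w t c * x.
  by move=> x; rewrite -mulr_suml mass // mul1r.
apply/andP; split.
  rewrite [X in X <= _]hb /Psi; apply: ler_sum => c _.
  apply: ler_wpM2l; first exact: distr_ge0.
  by rewrite /b -intrN ler_int; have /andP [] := @Phi_bound n w c.
rewrite [X in _ <= X]hb /Psi; apply: ler_sum => c _.
apply: ler_wpM2l; first exact: distr_ge0.
by rewrite /b ler_int; have /andP [] := @Phi_bound n w c.
Qed.


Lemma Psi_tele n w T : (1 < n)%N -> (2 * w < n)%N ->
  Psi n w 0 + 8 / (n * n.-1)%:R * \sum_(t < T) qnf n w t <= Psi n w T.
Proof.
move=> h1 hn; elim: T => [|T IH]; first by rewrite big_ord0 mulr0 addr0.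
rewrite big_ord_recr /= mulrDr addrA.
apply: le_trans (Psi_step T h1 hn).
by rewrite lerD2r.
Qed.

Lemma prob_qnf n w t : (1 < n)%N -> prob_frozen_at n w t = 1 - qnf n w t.
Proof.
move=> h; rewrite -(mass w t h) (bigID (fun c => frozen w c)) /=.
by rewrite /prob_frozen_at /qnf addrK.
Qed.

Lemma Bnd_ge0 n w : 0 <= Bnd n w.
Proof. by rewrite /Bnd mulrn_wge0. Qed.

Unset Implicit Arguments.
Theorem proposition1 (w : nat) (eps : rat) (heps : 0 < eps) :
  exists N : nat, forall n : nat, (N <= n)%N ->
    exists t : nat, 1 - eps <= prob_frozen_at n w t.
Proof.
exists (2 * w + 2)%N => n hn.
have h1 : (1 < n)%N by lia.
have h2 : (2 * w < n)%N by lia.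
have K0 := K_gt0 h1.
set K : rat := (n * n.-1)%:R in K0 *.
set b : rat := (Bnd n w)%:~R.
have b0 : 0 <= b by rewrite /b ler0z Bnd_ge0.
set x : rat := (2 * b * K) / (8 * eps).
have x0 : 0 <= x by rewrite /x divr_ge0 // ?mulr_ge0 // ltW // mulr_gt0.
have hT := archi_boundP x0.
set T := Num.Def.archi_bound x in hT.
case: (boolP [exists t : 'I_T, qnf n w t <= eps]).
  move=> /existsP [t ht]; exists t; rewrite prob_qnf //; lra.
rewrite negb_exists => /forallP hall; exfalso.
have hS : T%:R * eps <= \sum_(t < T) qnf n w t.
  rewrite mulr_natl -[T in _ *+ T]card_ord -sumr_const.
  by apply: ler_sum => t _; have := hall t; rewrite -ltNge => /ltW.
have hte := @Psi_tele n w T h1 h2.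
have /andP [l0 _] := @Psi_bound n w 0 h1.
have /andP [_ uT] := @Psi_bound n w T h1.
set S := \sum_(t < T) qnf n w t in hS hte.
have hS' : 8 * S <= 2 * b * K.
  have : 8 / K * S <= 2 * b by rewrite -/b in l0 uT; lra.
  by rewrite mulrAC ler_pdivrMr.
rewrite /x ltr_pdivrMr ?mulr_gt0 // in hT.
set y := T%:R * eps in hS.
have : T%:R * (8 * eps) = 8 * y by rewrite /y; ring.
lra.
Qed.
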